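(* Let $\mathcal{J}=(a,b)$ be a finite interval, $m\geq3$, $\varepsilon\in[0,\varepsilon_0]$, $Q(\cdot;\varepsilon)\in L_1(\mathcal{J};\mathbb{C})$, $\alpha(\varepsilon),\beta(\varepsilon)\in\mathbb{C}^{m\times m}$, and let $A(\cdot;\varepsilon)$ be the matrix function $$A(\cdot;\varepsilon)=\begin{pmatrix} 0&1&0&\cdots&0&0\\ \vdots&\vdots&\ddots&&\vdots&\vdots\\ 0&0&0&\cdots&1&0\\ -i^{-m}Q(\cdot;\varepsilon)&0&0&\cdots&0&1\\ 0&i^{-m}Q(\cdot;\varepsilon)&0&\cdots&0&0 \end{pmatrix}$$ (ones on the superdiagonal, the displayed entries in the last two rows, all other entries zero). Suppose that, for all sufficiently small $\varepsilon$, the boundary value problem $w'=A(\cdot;\varepsilon)w+\varphi$, $\alpha(\varepsilon)w(a)+\beta(\varepsilon)w(b)=0$ has a Green matrix $G(t,s;\varepsilon)=(g_{ij}(t,s;\varepsilon))_{i,j=1}^m\in L_\infty(\mathcal{J}\times\mathcal{J})^{m\times m}$. Then (for such $\varepsilon$) the semi-homogeneous boundary value problem $$i^mD^{[m]}_\varepsilon y=f,\qquad \alpha(\varepsilon)\mathcal{Y}_\varepsilon(a)+\beta(\varepsilon)\mathcal{Y}_\varepsilon(b)=0\qquad(f\in L_2(\mathcal{J};\mathbb{C}))$$ has a Green function $\Gamma(t,s;\varepsilon)$, and $\Gamma(t,s;\varepsilon)=i^{-m}g_{1m}(t,s;\varepsilon)$ for almost all $(t,s)$.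
   Context: Quasi-derivatives: $D^{[k]}_\varepsilon y=y^{(k)}$ for $k=0,\dots,m-2$; $D^{[m-1]}_\varepsilon y=y^{(m-1)}+i^{-m}Q(\cdot;\varepsilon)y$; $D^{[m]}_\varepsilon y=(D^{[m-1]}_\varepsilon y)'-i^{-m}Q(\cdot;\varepsilon)D^{[1]}_\varepsilon y$; $\mathcal{Y}_\varepsilon(x)=(D^{[0]}_\varepsilon y(x),\dots,D^{[m-1]}_\varepsilon y(x))$. A Green matrix of the first-order problem is a matrix function $G$ such that for every $\varphi\in L_1(\mathcal{J})^m$ the problem has the unique solution $w(t)=\int_a^bG(t,s;\varepsilon)\varphi(s)\,ds$. A Green function of the scalar problem is a function $\Gamma$ such that for every $f\in L_2(\mathcal{J};\mathbb{C})$ the problem has the unique solution $y(t)=\int_a^b\Gamma(t,s;\varepsilon)f(s)\,ds$. *)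

(* Defs.v *)
From HB Require Import structures.
From mathcomp Require Import all_boot all_order all_algebra.
From mathcomp Require Import all_classical all_reals all_analysis.
From mathcomp Require Import complex.
Set Implicit Arguments. Unset Strict Implicit. Unset Printing Implicit Defensive.
Import Order.TTheory GRing.Theory Num.Theory.
Local Open Scope classical_set_scope.
Local Open Scope ring_scope.

Section Defs.
Variable R : realType.
Local Notation C := (R[i]).
Local Notation mu := (@lebesgue_measure R).

Definition iC : C := Complex 0 1.
Definition RtoC (x : R) : C := Complex x 0.

Definition cmeasurable (D : set R) (f : R -> C) :=
  measurable_fun D (fun x => complex.Re (f x)) /\
  measurable_fun D (fun x => complex.Im (f x)).

Definition cintegrable (D : set R) (f : R -> C) :=
  mu.-integrable D (fun x => (complex.Re (f x))%:E) /\
  mu.-integrable D (fun x => (complex.Im (f x))%:E).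

Definition cL2 (D : set R) (f : R -> C) :=
  cmeasurable D f /\
  mu.-integrable D (fun x => (complex.Re (f x) ^+ 2 + complex.Im (f x) ^+ 2)%:E).

Definition cint (D : set R) (f : R -> C) : C :=
  RtoC (Rintegral mu D (fun x => complex.Re (f x))) +
  iC * RtoC (Rintegral mu D (fun x => complex.Im (f x))).

Definition vintegrable (m : nat) (D : set R) (phi : R -> 'cV[C]_m) :=
  forall i : 'I_m, cintegrable D (fun x => phi x i ord0).

Definition vint (m : nat) (D : set R) (phi : R -> 'cV[C]_m) : 'cV[C]_m :=
  \col_i cint D (fun x => phi x i ord0).

(* the coefficient matrix A(t; eps) of the first order system, given the
   value q = Q(t; eps): ones on the superdiagonal, -i^{-m} q at position
   (m-1, 1) and i^{-m} q at position (m, 2) (1-based), zero elsewhere. *)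
Definition Amat (m : nat) (q : C) : 'M[C]_m :=
  \matrix_(i < m, j < m)
    if (j : nat) == (i : nat).+1 then 1
    else if ((i : nat) == m.-2) && ((j : nat) == 0%N) then - (iC ^- m * q)
    else if ((i : nat) == m.-1) && ((j : nat) == 1%N) then iC ^- m * q
    else 0.

(* w is a (Caratheodory) solution on [a,b] of
     w' = A w + phi,  alpha w(a) + beta w(b) = 0,
   i.e. w is absolutely continuous on [a,b] with w' = A w + phi a.e. *)
Definition sys_solution (a b : R) (m : nat) (A : R -> 'M[C]_m)
    (phi : R -> 'cV[C]_m) (alpha beta : 'M[C]_m) (w : R -> 'cV[C]_m) :=
  vintegrable `[a, b] (fun s => A s *m w s + phi s) /\
  (forall t, a <= t <= b ->
     w t = w a + vint `[a, t] (fun s => A s *m w s + phi s)) /\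
  alpha *m w a + beta *m w b = 0.

Definition green_matrix (a b : R) (m : nat) (A : R -> 'M[C]_m)
    (alpha beta : 'M[C]_m) (G : R -> R -> 'M[C]_m) :=
  forall phi : R -> 'cV[C]_m, vintegrable `]a, b[ phi ->
    exists w, sys_solution a b A phi alpha beta w /\
      (forall t, a < t < b ->
         vintegrable `]a, b[ (fun s => G t s *m phi s) /\
         w t = vint `]a, b[ (fun s => G t s *m phi s)) /\
      (forall w', sys_solution a b A phi alpha beta w' ->
         forall t, a <= t <= b -> w' t = w t).

(* yq k (k = 0, ..., m-1) are the quasi-derivatives D^{[k]} y on [a,b]
   and Dm is D^{[m]} y (defined a.e.); each of D^{[0]},...,D^{[m-1]} is
   absolutely continuous, written in integrated form:
     (D^{[k]} y)' = D^{[k+1]} y                         (k <= m-3)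
     (D^{[m-2]} y)' = y^{(m-1)} = D^{[m-1]} y - i^{-m} Q y
     (D^{[m-1]} y)' = D^{[m]} y + i^{-m} Q D^{[1]} y.                *)
Definition quasi_derivs (a b : R) (m : nat) (q : R -> C) (y : R -> C)
    (yq : nat -> R -> C) (Dm : R -> C) :=
  (forall t, a <= t <= b -> yq 0%N t = y t) /\
  (forall k, (k < m - 2)%N ->
     cintegrable `[a, b] (yq k.+1) /\
     forall t, a <= t <= b -> yq k t = yq k a + cint `[a, t] (yq k.+1)) /\
  (cintegrable `[a, b] (fun s => yq m.-1 s - iC ^- m * q s * yq 0%N s) /\
   forall t, a <= t <= b ->
     yq m.-2 t = yq m.-2 a + cint `[a, t] (fun s => yq m.-1 s - iC ^- m * q s * yq 0%N s)) /\
  (cintegrable `[a, b] (fun s => Dm s + iC ^- m * q s * yq 1%N s) /\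
   forall t, a <= t <= b ->
     yq m.-1 t = yq m.-1 a + cint `[a, t] (fun s => Dm s + iC ^- m * q s * yq 1%N s)).

Definition Yvec (m : nat) (yq : nat -> R -> C) (x : R) : 'cV[C]_m :=
  \col_(i < m) yq (i : nat) x.

Definition scalar_solution (a b : R) (m : nat) (q : R -> C)
    (alpha beta : 'M[C]_m) (f : R -> C) (y : R -> C) :=
  exists (yq : nat -> R -> C) (Dm : R -> C),
    quasi_derivs a b m q y yq Dm /\
    {ae mu, forall t, `]a, b[%classic t -> iC ^+ m * Dm t = f t} /\
    alpha *m Yvec m yq a + beta *m Yvec m yq b = 0.

Definition green_function (a b : R) (m : nat) (q : R -> C)
    (alpha beta : 'M[C]_m) (Gam : R -> R -> C) :=
  forall f : R -> C, cL2 `]a, b[ f ->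
    exists y, scalar_solution a b q alpha beta f y /\
      (forall t, a < t < b ->
         cintegrable `]a, b[ (fun s => Gam t s * f s) /\
         y t = cint `]a, b[ (fun s => Gam t s * f s)) /\
      (forall y', scalar_solution a b q alpha beta f y' ->
         forall t, a <= t <= b -> y' t = y t).

Definition cLinf2 (a b : R) (g : R -> R -> C) :=
  measurable_fun (`]a, b[%classic `*` `]a, b[%classic) (fun p : R * R => complex.Re (g p.1 p.2)) /\
  measurable_fun (`]a, b[%classic `*` `]a, b[%classic) (fun p : R * R => complex.Im (g p.1 p.2)) /\
  exists M : R, {ae (mu \x mu)%E, forall p : R * R,
     (`]a, b[%classic `*` `]a, b[%classic) p -> `|g p.1 p.2| <= RtoC M}.

End Defs.

Lemma first_lt (m : nat) : (3 <= m)%N -> (0 < m)%N.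
Proof. by case: m. Qed.
Lemma last_lt (m : nat) : (3 <= m)%N -> (m.-1 < m)%N.
Proof. by case: m. Qed.
(* 1-based indices 1 and m *)
Definition ind_1 (m : nat) (hm : (3 <= m)%N) : 'I_m := Ordinal (first_lt hm).
Definition ind_m (m : nat) (hm : (3 <= m)%N) : 'I_m := Ordinal (last_lt hm).

(* Main.v *)
Require Import Defs.
From HB Require Import structures.
From mathcomp Require Import all_boot all_order all_algebra.
From mathcomp Require Import all_classical all_reals all_analysis.
From mathcomp Require Import complex.
From mathcomp Require Import lra zify.
Import Order.TTheory GRing.Theory Num.Theory.
Local Open Scope classical_set_scope.
Local Open Scope ring_scope.

Section H.
Variable R : realType.
Local Notation C := (R[i]).
Local Notation mu := (@lebesgue_measure R).

Lemma ReM (x y : C) : complex.Re (x * y) = complex.Re x * complex.Re y - complex.Im x * complex.Im y.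
Proof. by case: x => ? ?; case: y => ? ?. Qed.
Lemma ImM (x y : C) : complex.Im (x * y) = complex.Re x * complex.Im y + complex.Im x * complex.Re y.
Proof. by case: x => ? ?; case: y => ? ?. Qed.
Lemma ReD (x y : C) : complex.Re (x + y) = complex.Re x + complex.Re y.
Proof. by case: x => ? ?; case: y => ? ?. Qed.
Lemma ImD (x y : C) : complex.Im (x + y) = complex.Im x + complex.Im y.
Proof. by case: x => ? ?; case: y => ? ?. Qed.

Lemma integrable_cst_itv (a b : R) (k : R) :
  mu.-integrable `]a, b[ (fun _ => k%:E).
Proof.
apply/integrableP; split; first exact: measurable_cst.
rewrite (_ : (fun x => `|k%:E|%E) = cst `|k|%:E); last by [].
rewrite integral_cst //= lebesgue_measure_itv /=.
case: ifP => _; last by rewrite mule0.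
by rewrite -EFinD -EFinM ltry.
Qed.

Lemma cint_Z (D : set R) (mD : @measurable _ (measurableTypeR R) D) (c : C) (f : R -> C) :
  cintegrable D f -> cintegrable D (fun x => c * f x).
Proof.
move=> [hr hi]; split.
-   apply: (eq_integrable mD _ _ _) (integrableB mD (integrableZl mD (complex.Re c) hr)
                                       (integrableZl mD (complex.Im c) hi)) => x _.
  by rewrite /= ReM EFinB !EFinM.
- apply: (eq_integrable mD _ _ _) (integrableD mD (integrableZl mD (complex.Re c) hi)
                                       (integrableZl mD (complex.Im c) hr)) => x _.
  by rewrite /= ImM EFinD !EFinM.
Qed.

Lemma cint_D (D : set R) (mD : @measurable _ (measurableTypeR R) D) (f g : R -> C) :
  cintegrable D f -> cintegrable D g -> cintegrable D (fun x => f x + g x).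
Proof.
move=> [hr hi] [gr gi]; split.
- by apply: (eq_integrable mD _ _ _) (integrableD mD hr gr) => x _; rewrite /= ReD EFinD.
- by apply: (eq_integrable mD _ _ _) (integrableD mD hi gi) => x _; rewrite /= ImD EFinD.
Qed.

Lemma cint_0 (D : set R) (mD : @measurable _ (measurableTypeR R) D) : cintegrable D (fun _ => (0 : C)).
Proof. by split; apply: (eq_integrable mD _ _ _) (integrable0 _ _) => x _. Qed.

Lemma absle (r s : R) : `|r| <= `|1 + (r ^+ 2 + s ^+ 2)|.
Proof.
rewrite [X in _ <= X]ger0_norm; last by rewrite addr_ge0 ?addr_ge0 ?sqr_ge0.
have h := normr_ge0 r; have h2 : `|r| ^+ 2 = r ^+ 2 by rewrite real_normK ?num_real.
have h3 := sqr_ge0 s. nra.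
Qed.

Lemma L2_L1 (a b : R) (f : R -> C) : cL2 `]a, b[ f -> cintegrable `]a, b[ f.
Proof.
move=> [[mr mi] hi].
have mD : @measurable _ (measurableTypeR R) `]a, b[ by exact: measurable_itv.
have g := integrableD mD (integrable_cst_itv a b 1) hi.
split.
- apply: (le_integrable mD) g => //; first exact/measurable_realfun.measurable_EFinP.
  by move=> x _ /=; rewrite lee_fin absle.
- apply: (le_integrable mD) g => //; first exact/measurable_realfun.measurable_EFinP.
  by move=> x _ /=; rewrite lee_fin (addrC (complex.Re (f x) ^+ 2)) absle.
Qed.

Lemma ae_transfer (D : set R) (mD : @measurable _ (measurableTypeR R) D) (h1 h2 : R -> R) :
  measurable_fun D h2 -> {ae mu, forall x, D x -> h1 x = h2 x} ->
  mu.-integrable D (EFin \o h1) ->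
  mu.-integrable D (EFin \o h2) /\ Rintegral mu D h1 = Rintegral mu D h2.
Proof.
move=> m2 hae i1.
have m1' := measurable_int mu i1.
have m2T : @measurable_fun _ _ (measurableTypeR R) _ D h2 := m2.
have m2' := (measurable_realfun.measurable_EFinP D h2).2 m2T.
split.
- apply/integrableP; split => //.
  rewrite (@ae_eq_integral _ (measurableTypeR R) R mu D (fun x => `|(EFin \o h1) x|)%E) //.
  + by case/integrableP: i1.
  + rewrite (_ : (fun x => _) = EFin \o (fun x => `|h2 x|)); last first.
      by apply: funext => x /=.
    apply/measurable_realfun.measurable_EFinP.
    exact: (measurableT_comp (@measurable_realfun.normr_measurable R setT) m2T).
  + have m1T : @measurable_fun _ _ (measurableTypeR R) _ D h1.
      exact/(measurable_realfun.measurable_EFinP D h1).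
    rewrite (_ : (fun x => _) = EFin \o (fun x => `|h1 x|)); last first.
      by apply: funext => x /=.
    apply/measurable_realfun.measurable_EFinP.
    exact: (measurableT_comp (@measurable_realfun.normr_measurable R setT) m1T).
  + by apply: (@filterS _ _ (ae_filter_ringOfSetsType mu) _ _ _ hae) => x hx Dx /=; rewrite hx.
- rewrite /Rintegral; congr fine.
  apply: (@ae_eq_integral _ (measurableTypeR R) R mu D) => //.
  by apply: (@filterS _ _ (ae_filter_ringOfSetsType mu) _ _ _ hae) => x hx Dx /=; rewrite hx.
Qed.

Local Notation aeF := (ae_filter_ringOfSetsType (@lebesgue_measure R)).

Lemma cae (D : set R) (mD : @measurable _ (measurableTypeR R) D) (h1 h2 : R -> C) :
  cmeasurable D h2 -> {ae mu, forall x, D x -> h1 x = h2 x} ->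
  cintegrable D h1 -> cintegrable D h2 /\ cint D h1 = cint D h2.
Proof.
move=> [mr mi] hae [ir ii].
have aer : {ae mu, forall x, D x -> complex.Re (h1 x) = complex.Re (h2 x)}.
  by apply: (@filterS _ _ aeF _ _ _ hae) => x hx Dx; rewrite hx.
have aei : {ae mu, forall x, D x -> complex.Im (h1 x) = complex.Im (h2 x)}.
  by apply: (@filterS _ _ aeF _ _ _ hae) => x hx Dx; rewrite hx.
have [jr er] := ae_transfer D mD (fun x => complex.Re (h1 x)) (fun x => complex.Re (h2 x)) mr aer ir.
have [ji ei] := ae_transfer D mD (fun x => complex.Im (h1 x)) (fun x => complex.Im (h2 x)) mi aei ii.
by split; [split | rewrite /cint er ei].
Qed.

Lemma ae_pt (a : R) : {ae mu, forall x, x <> a}.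
Proof.
exists [set a]; split; first exact: measurable_set1.
  exact: lebesgue_measure_set1.
by move=> x /= /contrapT.
Qed.

Lemma ae_itv (a b t : R) (P : R -> Prop) : a <= t <= b ->
  {ae mu, forall x, `]a, b[%classic x -> P x} -> {ae mu, forall x, `[a, t]%classic x -> P x}.
Proof.
move=> /andP[ha tb] h.
have h2 := @filterI _ _ aeF _ _ (ae_pt a) (ae_pt b).
apply: (@filterS2 _ _ aeF _ _ _ _ h h2) => x hx [xa xb].
rewrite /= in_itv /= => /andP[ax xt]; apply: hx.
rewrite /= in_itv /=; apply/andP; split.
  by rewrite lt_neqAle ax andbT; apply/eqP => e; apply: xa.
by rewrite lt_neqAle (le_trans xt tb) andbT; apply/eqP.
Qed.

Lemma A1 (n : nat) (q : C) (w : 'cV[C]_n.+3) (k : nat) : (k < n.+1)%N ->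
  (Amat n.+3 q *m w) (inord k) ord0 = w (inord k.+1) ord0.
Proof.
move=> hk.
rewrite mxE (bigD1 (inord k.+1)) //= big1 ?addr0.
  rewrite mxE !inordK ?eqxx ?mul1r //; lia.
move=> j hj; rewrite mxE !inordK; last lia.
have -> : ((j : nat) == k.+1) = false.
  apply/negbTE; apply: contra hj => /eqP e; apply/eqP/val_inj.
  by rewrite /= inordK ?e //; lia.
have -> : (k == n.+1) = false by apply/negbTE; lia.
have -> : (k == n.+2) = false by apply/negbTE; lia.
by rewrite /= mul0r.
Qed.

Lemma ord_neq (n : nat) (j : 'I_n.+1) (k : nat) : (k <= n)%N -> j != inord k -> ((j : nat) == k) = false.
Proof.
move=> hk hj; apply/negbTE; apply: contra hj => /eqP e; apply/eqP/val_inj.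
by rewrite /= inordK ?e //; lia.
Qed.

Lemma A2 (n : nat) (q : C) (w : 'cV[C]_n.+3) :
  (Amat n.+3 q *m w) (inord n.+1) ord0 =
  w (inord n.+2) ord0 - @iC R ^- n.+3 * q * w (inord 0) ord0.
Proof.
rewrite mxE (bigD1 (inord n.+2)) //= (bigD1 (inord 0)) /=; last first.
  by apply/eqP => /(congr1 val) /=; rewrite !inordK //.
rewrite big1 ?addr0.
  by rewrite !mxE !inordK ?eqxx //= mul1r mulNr.
move=> j /andP[h1 h2]; rewrite mxE !inordK //.
rewrite (ord_neq _ _ _ _ h1) // (ord_neq _ _ _ _ h2) //=.
by rewrite andbF (_ : (n.+1 == n.+2) = false) ?mul0r //; lia.
Qed.

Lemma A3 (n : nat) (q : C) (w : 'cV[C]_n.+3) :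
  (Amat n.+3 q *m w) (inord n.+2) ord0 = @iC R ^- n.+3 * q * w (inord 1) ord0.
Proof.
rewrite mxE (bigD1 (inord 1)) //= big1 ?addr0.
  by rewrite !mxE !inordK ?eqxx //=; rewrite andbF.
move=> j h1; rewrite mxE !inordK //.
rewrite (ord_neq _ _ _ _ h1) //=.
have -> : ((j : nat) == n.+3) = false by apply/negbTE; have := ltn_ord j; lia.
have -> : (n.+2 == n.+1) = false by lia.
by rewrite andbF mul0r.
Qed.

Lemma cint_meas (D : set R) (f : R -> C) : cintegrable D f -> cmeasurable D f.
Proof.
move=> [hr hi]; split.
- have := measurable_int mu hr => h.
  exact: ((measurable_realfun.measurable_EFinP D (fun x => complex.Re (f x))).1 h).
- have := measurable_int mu hi => h.
  exact: ((measurable_realfun.measurable_EFinP D (fun x => complex.Im (f x))).1 h).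
Qed.

Lemma cmeasM (D : set R) (f g : R -> C) : cmeasurable D f -> cmeasurable D g ->
  cmeasurable D (fun x => f x * g x).
Proof.
move=> [fr fi] [gr gi]; split.
- under eq_fun do rewrite ReM.
  exact: measurable_realfun.measurable_funB (measurable_realfun.measurable_funM _ _) (measurable_realfun.measurable_funM _ _).
- under eq_fun do rewrite ImM.
  exact: measurable_realfun.measurable_funD (measurable_realfun.measurable_funM _ _) (measurable_realfun.measurable_funM _ _).
Qed.

Lemma cmeasD (D : set R) (f g : R -> C) : cmeasurable D f -> cmeasurable D g ->
  cmeasurable D (fun x => f x + g x).
Proof.
move=> [fr fi] [gr gi]; split.
- under eq_fun do rewrite ReD. exact: measurable_realfun.measurable_funD.
- under eq_fun do rewrite ImD. exact: measurable_realfun.measurable_funD.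
Qed.

Lemma cmeasC (D : set R) (c : C) : cmeasurable D (fun _ => c).
Proof. by split; exact: measurable_cst. Qed.

Lemma cmeasS (D E : set R) (f : R -> C) : @measurable _ (measurableTypeR R) E -> D `<=` E ->
  cmeasurable E f -> cmeasurable D f.
Proof. by move=> mE DE [hr hi]; split; apply: measurable_funS hr || apply: measurable_funS hi. Qed.

Lemma cmeas_cc (a b : R) (f : R -> C) : cmeasurable `]a, b[ f -> cmeasurable `[a, b] f.
Proof.
by move=> [hr hi]; split; apply: measurable_realfun.measurable_fun_itv_cc;
  [exact: hr | exact: hi].
Qed.

Lemma cintS (D E : set R) (f : R -> C) : @measurable _ (measurableTypeR R) E ->
  @measurable _ (measurableTypeR R) D -> D `<=` E ->
  cintegrable E f -> cintegrable D f.
Proof. by move=> mE mD DE [hr hi]; split; apply: (integrableS mE mD DE). Qed.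

Lemma iC_neq0 : @iC R != 0.
Proof. by apply/eqP => -[] /eqP; rewrite oner_eq0. Qed.

Lemma iCK (n : nat) (x : C) : @iC R ^+ n * (@iC R ^- n * x) = x.
Proof. by rewrite mulrA mulrV ?mul1r // unitfE expf_neq0 // iC_neq0. Qed.

Lemma iCK' (n : nat) (x : C) : @iC R ^- n * (@iC R ^+ n * x) = x.
Proof. by rewrite mulrA mulVr ?mul1r // unitfE expf_neq0 // iC_neq0. Qed.

Lemma phi_entry (n : nat) (c : C) (f : R -> C) (s : R) (k : nat) : (k < n.+3)%N ->
  (\col_(i < n.+3) (if (i : nat) == n.+2 then c * f s else 0)) (inord k) ord0 =
  if k == n.+2 then c * f s else 0.
Proof. by move=> hk; rewrite mxE inordK. Qed.

Lemma mxaddE' (n : nat) (A B : 'cV[C]_n) i : (A + B) i ord0 = A i ord0 + B i ord0.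
Proof. by rewrite mxE. Qed.

Lemma vintE (n : nat) (D : set R) (phi : R -> 'cV[C]_n) i :
  vint D phi i ord0 = cint D (fun x => phi x i ord0).
Proof. by rewrite mxE. Qed.

Lemma ord_inord (n : nat) (i : 'I_n.+1) : exists2 k, (k < n.+1)%N & i = inord k.
Proof. by exists (val i); [exact: ltn_ord | rewrite inord_val]. Qed.


Definition phiv (n : nat) (c : C) (f : R -> C) (s : R) : 'cV[C]_n.+3 :=
  \col_(i < n.+3) (if (i : nat) == n.+2 then c * f s else 0).

Lemma compk (n : nat) (c : C) (f : R -> C) (qs : C) (ws : 'cV[C]_n.+3) s k : (k < n.+1)%N ->
  (Amat n.+3 qs *m ws + phiv n c f s) (inord k) ord0 = ws (inord k.+1) ord0.
Proof.
move=> hk; rewrite mxE A1 // /phiv mxE inordK; last lia.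
by rewrite (_ : (k == n.+2) = false) ?addr0 //; lia.
Qed.

Lemma comp1 (n : nat) (c : C) (f : R -> C) (qs : C) (ws : 'cV[C]_n.+3) s :
  (Amat n.+3 qs *m ws + phiv n c f s) (inord n.+1) ord0 =
  ws (inord n.+2) ord0 - @iC R ^- n.+3 * qs * ws (inord 0) ord0.
Proof.
rewrite mxE A2 /phiv mxE inordK //.
by rewrite (_ : (n.+1 == n.+2) = false) ?addr0 //; lia.
Qed.

Lemma comp2 (n : nat) (c : C) (f : R -> C) (qs : C) (ws : 'cV[C]_n.+3) s :
  (Amat n.+3 qs *m ws + phiv n c f s) (inord n.+2) ord0 =
  @iC R ^- n.+3 * qs * ws (inord 1) ord0 + c * f s.
Proof. by rewrite mxE A3 /phiv mxE inordK // eqxx. Qed.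

Lemma main (n : nat) (hm : (3 <= n.+3)%N) (a b : R) (q : R -> C) (al be : 'M[C]_n.+3)
  (G : R -> R -> 'M[C]_n.+3) :
  cintegrable `]a, b[ q ->
  green_matrix a b (fun t => Amat n.+3 (q t)) al be G ->
  green_function a b q al be (fun t s => @iC R ^- n.+3 * G t s (ind_1 hm) (ind_m hm)).
Proof.
move=> hq hG f hf.
set c := @iC R ^- n.+3.
have mab : @measurable _ (measurableTypeR R) `]a, b[ by exact: measurable_itv.
have mcc : forall x y : R, @measurable _ (measurableTypeR R) `[x, y] by move=> x y; exact: measurable_itv.
set phi := phiv n c f.
have hphi : vintegrable `]a, b[ phi.
  move=> i; have [k hk ->] := ord_inord _ i.
  have -> : (fun x => phi x (inord k) ord0) = fun x => if k == n.+2 then c * f x else 0.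
    by apply: funext => x; rewrite /phi /phiv mxE inordK.
  case: (k == n.+2).
  - exact: (cint_Z _ mab _ _ (L2_L1 _ _ _ hf)).
  - exact: (cint_0 _ mab).
have [w [[vi [weq wbd]] [rep uni]]] := hG phi hphi.
set yq := fun k t => w t (inord k) ord0.
have wA : forall s, (w s) = Yvec n.+3 yq s.
  by move=> s; apply/matrixP => i j; rewrite !mxE (ord1 j) /yq inord_val.
have i1 : inord 0 = ind_1 hm by apply: val_inj; rewrite /= inordK.
have im : inord n.+2 = ind_m hm by apply: val_inj; rewrite /= inordK.
exists (fun t => yq 0%N t); split; [|split].
- exists yq, (fun s => c * f s); split; [|split].
  + split; first by [].
    split; [|split].
    * move=> k hk; have hk' : (k < n.+1)%N by lia.
      have e : (fun s => (Amat n.+3 (q s) *m w s + phi s) (inord k) ord0) = yq k.+1.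
        by apply: funext => s; rewrite /phi compk.
      split; first by have := vi (inord k); rewrite e.
      move=> t ht; have := congr1 (fun M : 'cV[C]_n.+3 => M (inord k) ord0) (weq t ht).
      by rewrite /= mxaddE' vintE e.
    * have e : (fun s => (Amat n.+3 (q s) *m w s + phi s) (inord n.+1) ord0) =
             (fun s => yq n.+2 s - @iC R ^- n.+3 * q s * yq 0%N s).
        by apply: funext => s; rewrite /phi comp1.
      split; first by have := vi (inord n.+1); rewrite e.
      move=> t ht; have := congr1 (fun M : 'cV[C]_n.+3 => M (inord n.+1) ord0) (weq t ht).
      by rewrite /= mxaddE' vintE e.
    * have e : (fun s => (Amat n.+3 (q s) *m w s + phi s) (inord n.+2) ord0) =
             (fun s => c * f s + @iC R ^- n.+3 * q s * yq 1%N s).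
        by apply: funext => s; rewrite /phi comp2 addrC.
      split; first by have := vi (inord n.+2); rewrite e.
      move=> t ht; have := congr1 (fun M : 'cV[C]_n.+3 => M (inord n.+2) ord0) (weq t ht).
      by rewrite /= mxaddE' vintE e.
  + by apply: aeW => t _; rewrite iCK.
  + by rewrite -!wA.
- move=> t ht; have [vi' weq'] := rep t ht.
  have e : (fun s => (G t s *m phi s) (ind_1 hm) ord0) =
           (fun s => c * G t s (ind_1 hm) (ind_m hm) * f s).
    apply: funext => s; rewrite mxE (bigD1 (ind_m hm)) //= big1 ?addr0.
      by rewrite /phi /phiv mxE eqxx mulrCA mulrA.
    move=> j hj; rewrite /phi /phiv mxE.
    rewrite (_ : ((j : nat) == n.+2) = false) ?mulr0 //.
    apply/negbTE; apply: contra hj => /eqP ej; by apply/eqP/val_inj; rewrite /= ej.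
  split; first by have := vi' (ind_1 hm); rewrite e.
  have := congr1 (fun M : 'cV[C]_n.+3 => M (ind_1 hm) ord0) weq'; rewrite vintE e /yq i1.
  by move=> ->.
- move=> y' [yq' [Dm' [[q0 [qk [[qc1 qc2] [qd1 qd2]]]] [hae bd']]]] t ht.
  set w' := fun s => Yvec n.+3 yq' s.
  have ent : forall s k, (k < n.+3)%N -> w' s (inord k) ord0 = yq' k s.
    by move=> s k hk; rewrite /w' /Yvec mxE inordK.
  have sub : `]a, b[ `<=` `[a, b].
    by move=> x; rewrite /= !in_itv /= => /andP[h1 h2]; rewrite !ltW.
  set h1 := fun s => Dm' s + @iC R ^- n.+3 * q s * yq' 1%N s.
  set h2 := fun s => @iC R ^- n.+3 * q s * yq' 1%N s + c * f s.
  have cm2 : cmeasurable `[a, b] h2.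
    apply: cmeas_cc; rewrite /h2.
    apply: (cmeasD _ (fun s => _ * q s * yq' 1%N s) (fun s => c * f s)).
    - apply: (cmeasM _ (fun s => _ * q s) (yq' 1%N)).
      + exact: (cmeasM _ _ _ (cmeasC _ _) (cint_meas _ _ hq)).
      + apply: (cmeasS _ _ _ (mcc a b) sub); apply: cint_meas.
        by have := (qk 0%N ltac:(lia)).1.
    - apply: (cmeasM _ (fun _ => c) f); first exact: cmeasC.
      by case: hf.
  have aeh : forall t', a <= t' <= b -> {ae mu, forall x, `[a, t']%classic x -> h1 x = h2 x}.
    move=> t' ht'; apply: ae_itv ht' _.
    apply: (@filterS _ _ aeF _ _ _ hae) => x hx Dx.
    by rewrite /h1 /h2 addrC -(hx Dx) /c iCK'.
  have hab : a <= b by case/andP: ht => h h'; exact: le_trans h h'.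
  have [ih2 _] := cae _ (mcc a b) _ _ cm2 (aeh b ltac:(by rewrite hab lexx)) qd1.
  have ss : sys_solution a b (fun t => Amat n.+3 (q t)) phi al be w'.
    split; [|split].
    + move=> i; have [k hk ->] := ord_inord _ i.
      have [hk1|hk1] := ltnP k n.+1.
        have e : (fun s => (Amat n.+3 (q s) *m w' s + phi s) (inord k) ord0) = yq' k.+1.
          by apply: funext => s; rewrite /phi compk // ent //; lia.
        by rewrite e; apply: (qk k ltac:(lia)).1.
      have [-> | hk2] := eqVneq k n.+1.
        have e : (fun s => (Amat n.+3 (q s) *m w' s + phi s) (inord n.+1) ord0) =
             (fun s => yq' n.+2 s - @iC R ^- n.+3 * q s * yq' 0%N s).
          by apply: funext => s; rewrite /phi comp1 !ent.
        by rewrite e.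
      have -> : k = n.+2 by lia.
      have e : (fun s => (Amat n.+3 (q s) *m w' s + phi s) (inord n.+2) ord0) = h2.
        by apply: funext => s; rewrite /phi comp2 !ent.
      by rewrite e.
    + move=> t' ht'; apply/matrixP => i j; rewrite (ord1 j).
      have [k hk ->] := ord_inord _ i.
      rewrite mxaddE' vintE !ent //.
      have [hk1|hk1] := ltnP k n.+1.
        have e : (fun s => (Amat n.+3 (q s) *m w' s + phi s) (inord k) ord0) = yq' k.+1.
          by apply: funext => s; rewrite /phi compk // ent //; lia.
        by rewrite e; apply: (qk k ltac:(lia)).2.
      have [-> | hk2] := eqVneq k n.+1.
        have e : (fun s => (Amat n.+3 (q s) *m w' s + phi s) (inord n.+1) ord0) =
             (fun s => yq' n.+2 s - @iC R ^- n.+3 * q s * yq' 0%N s).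
          by apply: funext => s; rewrite /phi comp1 !ent.
        by rewrite e; apply: qc2.
      have -> : k = n.+2 by lia.
      have e : (fun s => (Amat n.+3 (q s) *m w' s + phi s) (inord n.+2) ord0) = h2.
        by apply: funext => s; rewrite /phi comp2 !ent.
      rewrite e (qd2 t' ht').
      have sub' : `[a, t'] `<=` `[a, b].
        move=> x; rewrite /= !in_itv /= => /andP[h h']; rewrite h /=.
        by case/andP: ht' => _ h''; exact: le_trans h' h''.
      have [_ ->] := cae _ (mcc a t') _ _ (cmeasS _ _ _ (mcc a b) sub' cm2) (aeh t' ht')
        (cintS _ _ _ (mcc a b) (mcc a t') sub' qd1).
      by [].
    + by [].
  have := uni w' ss t ht => /(congr1 (fun M : 'cV[C]_n.+3 => M (inord 0) ord0)).
  by rewrite ent // -(q0 t ht) => ->.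
Qed.
End H.

Theorem lemma5 (R : realType) (a b : R) (hab : a < b) (m : nat) (hm : (3 <= m)%N)
  (eps0 : R) (Q : R -> R -> R[i]) (alpha beta : R -> 'M[R[i]]_m)
  (G : R -> R -> R -> 'M[R[i]]_m) (delta : R) (hdelta : 0 < delta) :
  (forall eps, 0 <= eps <= eps0 -> cintegrable `]a, b[ (Q eps)) ->
  (forall eps, 0 <= eps <= eps0 -> eps < delta ->
     green_matrix a b (fun t => Amat m (Q eps t)) (alpha eps) (beta eps) (G eps) /\
     (forall i j : 'I_m, cLinf2 a b (fun t s => G eps t s i j))) ->
  forall eps, 0 <= eps <= eps0 -> eps < delta ->
    exists Gam : R -> R -> R[i],
      green_function a b (Q eps) (alpha eps) (beta eps) Gam /\
      {ae ((@lebesgue_measure R) \x (@lebesgue_measure R))%E, forall p : R * R,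
         (`]a, b[%classic `*` `]a, b[%classic) p ->
         Gam p.1 p.2 = @iC R ^- m * G eps p.1 p.2 (ind_1 hm) (ind_m hm)}.
Proof.
move=> hQ hG eps heps hd.
have [hgm _] := hG eps heps hd.
exists (fun t s => @iC R ^- m * G eps t s (ind_1 hm) (ind_m hm)); split; last by apply: aeW.
move: (hQ eps heps) hgm.
case: m hm alpha beta G {hG} => [|[|[|n]]] hm // alpha beta G hq hgm.
exact: main.
Qed.
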